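(* Let $Y\subset\mathbb{R}^n$ be open, and let $\omega\colon Y\to\mathbb{R}^n$, $f\colon Y\to\mathbb{R}^n$, $F\colon Y\to\mathbb{R}$, $H\colon Y\to\mathbb{R}^{n\times m}$, $g\colon Y\to\mathbb{R}^m$, $f^{\mathrm{num}}\colon Y\times Y\to\mathbb{R}^n$ be arbitrary with $f^{\mathrm{num}}(u,u)=f(u)$. Then the following are equivalent: (A) there exists $F^{\mathrm{num}}\colon Y\times Y\to\mathbb{R}$ with $F^{\mathrm{num}}(u,u)=F(u)$ such that for all $u_-,u_0,u_+\in Y$, $$\omega(u_0)\cdot\Big(f^{\mathrm{num}}(u_0,u_+)-f^{\mathrm{num}}(u_-,u_0)+\tfrac12 H(u_0)\big(g(u_+)-g(u_0)\big)+\tfrac12 H(u_0)\big(g(u_0)-g(u_-)\big)\Big)\ \ge\ F^{\mathrm{num}}(u_0,u_+)-F^{\mathrm{num}}(u_-,u_0);$$ (B) for all $u_-,u_+\in Y$, $$[\![\omega]\!]\cdot f^{\mathrm{num}}(u_-,u_+)-\{\{\omega\cdot H\}\}\,[\![g]\!]\ \le\ [\![\omega\cdot f-F]\!],$$ where $\omega\cdot H$ denotes the row vector $\omega^TH\in\mathbb{R}^{1\times m}$. Moreover, there exists a consistent $F^{\mathrm{num}}$ with equality in (A) for all triples iff (B) holds with equality for all pairs, and then $$F^{\mathrm{num}}=\{\{F\}\}+\{\{\omega\}\}\cdot f^{\mathrm{num}}-\{\{\omega\cdot f\}\}-\tfrac14[\![\omega\cdot H]\!]\,[\![g]\!].$$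
   Context: For a function $a$ on $Y$ and states $u_\pm$: $\{\{a\}\}=\tfrac12(a(u_-)+a(u_+))$, $[\![a]\!]=a(u_+)-a(u_-)$; numerical fluxes are evaluated at $(u_-,u_+)$. *)

(* Defs.v *)
From HB Require Import structures.
From mathcomp Require Import all_boot all_order all_algebra.
From mathcomp Require Import all_classical all_reals all_analysis.
Set Implicit Arguments. Unset Strict Implicit. Unset Printing Implicit Defensive.
Import Order.TTheory GRing.Theory Num.Theory.
Local Open Scope ring_scope.

Definition dotv (R : realType) (n : nat) (a b : 'cV[R]_n) : R := (a^T *m b) 0 0.

Definition wH (R : realType) (n m : nat) (w : 'cV[R]_n) (H : 'M[R]_(n, m)) : 'rV[R]_m :=
  w^T *m H.

Definition rdot (R : realType) (m : nat) (r : 'rV[R]_m) (c : 'cV[R]_m) : R := (r *m c) 0 0.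

(* Main.v *)
Require Import Defs.
From HB Require Import structures.
From mathcomp Require Import all_boot all_order all_algebra.
From mathcomp Require Import all_classical all_reals all_analysis.
Import Order.TTheory GRing.Theory Num.Theory.
Local Open Scope classical_set_scope.
Local Open Scope ring_scope.

From mathcomp Require Import lra.

Section H.
Variable R : realType.
Lemma dotvDr n (a b c : 'cV[R]_n) : dotv a (b + c) = dotv a b + dotv a c.
Proof. by rewrite /dotv mulmxDr mxE. Qed.
Lemma dotvBr n (a b c : 'cV[R]_n) : dotv a (b - c) = dotv a b - dotv a c.
Proof. by rewrite /dotv mulmxBr !mxE. Qed.
Lemma dotvNr n (a b : 'cV[R]_n) : dotv a (- b) = - dotv a b.
Proof. by rewrite /dotv mulmxN mxE. Qed.
Lemma dotvZr n (a b : 'cV[R]_n) k : dotv a (k *: b) = k * dotv a b.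
Proof. by rewrite /dotv -scalemxAr mxE. Qed.
Lemma dotvDl n (a b c : 'cV[R]_n) : dotv (a + b) c = dotv a c + dotv b c.
Proof. by rewrite /dotv linearD /= mulmxDl mxE. Qed.
Lemma dotvBl n (a b c : 'cV[R]_n) : dotv (a - b) c = dotv a c - dotv b c.
Proof. by rewrite /dotv linearB /= mulmxBl !mxE. Qed.
Lemma dotvZl n (a b : 'cV[R]_n) k : dotv (k *: a) b = k * dotv a b.
Proof. by rewrite /dotv linearZ /= -scalemxAl mxE. Qed.
Lemma rdotDl m (a b : 'rV[R]_m) c : rdot (a + b) c = rdot a c + rdot b c.
Proof. by rewrite /rdot mulmxDl mxE. Qed.
Lemma rdotBl m (a b : 'rV[R]_m) c : rdot (a - b) c = rdot a c - rdot b c.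
Proof. by rewrite /rdot mulmxBl !mxE. Qed.
Lemma rdotZl m (a : 'rV[R]_m) c k : rdot (k *: a) c = k * rdot a c.
Proof. by rewrite /rdot -scalemxAl mxE. Qed.
Lemma rdotBr m (a : 'rV[R]_m) b c : rdot a (b - c) = rdot a b - rdot a c.
Proof. by rewrite /rdot mulmxBr !mxE. Qed.
Lemma dotv_mul n m (a : 'cV[R]_n) (M : 'M[R]_(n, m)) x :
  dotv a (M *m x) = rdot (wH a M) x.
Proof. by rewrite /dotv /rdot /wH mulmxA. Qed.
End H.

Theorem mainTheorem4 (R : realType) (n m : nat) (Y : set 'rV[R]_n)
  (w f : 'rV[R]_n -> 'cV[R]_n) (F : 'rV[R]_n -> R)
  (H : 'rV[R]_n -> 'M[R]_(n, m)) (g : 'rV[R]_n -> 'cV[R]_m)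
  (fnum : 'rV[R]_n -> 'rV[R]_n -> 'cV[R]_n) :
  open (Y : set 'rV[R^o]_n) ->
  (forall u, Y u -> fnum u u = f u) ->
  let lhsA u_ u0 up :=
    dotv (w u0) (fnum u0 up - fnum u_ u0
                 + (1 / 2) *: (H u0 *m (g up - g u0))
                 + (1 / 2) *: (H u0 *m (g u0 - g u_))) in
  let consistent (Fnum : 'rV[R]_n -> 'rV[R]_n -> R) :=
    forall u, Y u -> Fnum u u = F u in
  let lhsB u_ up :=
    dotv (w up - w u_) (fnum u_ up)
    - rdot ((1 / 2) *: (wH (w u_) (H u_) + wH (w up) (H up))) (g up - g u_) in
  let rhsB u_ up :=
    (dotv (w up) (f up) - F up) - (dotv (w u_) (f u_) - F u_) in
  ((exists Fnum, consistent Fnum /\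
      forall u_ u0 up, Y u_ -> Y u0 -> Y up ->
        lhsA u_ u0 up >= Fnum u0 up - Fnum u_ u0)
   <->
   (forall u_ up, Y u_ -> Y up -> lhsB u_ up <= rhsB u_ up))
  /\
  (((exists Fnum, consistent Fnum /\
      forall u_ u0 up, Y u_ -> Y u0 -> Y up ->
        lhsA u_ u0 up = Fnum u0 up - Fnum u_ u0)
    <->
    (forall u_ up, Y u_ -> Y up -> lhsB u_ up = rhsB u_ up))
   /\
   (forall Fnum, consistent Fnum ->
      (forall u_ u0 up, Y u_ -> Y u0 -> Y up ->
         lhsA u_ u0 up = Fnum u0 up - Fnum u_ u0) ->
      forall u_ up, Y u_ -> Y up ->
        Fnum u_ up =
          (1 / 2) * (F u_ + F up)
          + dotv ((1 / 2) *: (w u_ + w up)) (fnum u_ up)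
          - (1 / 2) * (dotv (w u_) (f u_) + dotv (w up) (f up))
          - (1 / 4) * rdot (wH (w up) (H up) - wH (w u_) (H u_)) (g up - g u_))).
Proof.
move=> _ Hf lhsA consistent lhsB rhsB.
have eA : forall a b c, lhsA a b c = dotv (w b) (fnum b c) - dotv (w b) (fnum a b)
   + 1/2 * (rdot (wH (w b) (H b)) (g c) - rdot (wH (w b) (H b)) (g a)).
  move=> a b c; rewrite /lhsA !dotvDr dotvNr !dotvZr !dotv_mul !rdotBr; lra.
have eB : forall a c, lhsB a c = dotv (w c) (fnum a c) - dotv (w a) (fnum a c)
   - 1/2 * (rdot (wH (w a) (H a)) (g c) - rdot (wH (w a) (H a)) (g a)
            + rdot (wH (w c) (H c)) (g c) - rdot (wH (w c) (H c)) (g a)).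
  move=> a c; rewrite /lhsB dotvBl rdotZl rdotDl !rdotBr; lra.
pose F0 u v := dotv (w u) (fnum u v) - dotv (w u) (f u)
   + 1/2 * (rdot (wH (w u) (H u)) (g v) - rdot (wH (w u) (H u)) (g u)) + F u.
have cF0 : consistent F0.
  by move=> u Yu; rewrite /F0 (Hf u Yu); lra.
split; [|split].
- split.
  + move=> [Fn [cF HA]] a c Ya Yc.
    have h1 := HA a a c Ya Ya Yc; have h2 := HA a c c Ya Yc Yc.
    rewrite !eA (Hf a Ya) (cF a Ya) in h1; rewrite !eA (Hf c Yc) (cF c Yc) in h2.
    rewrite eB /rhsB; lra.
  + move=> HB; exists F0; split => // a b c Ya Yb Yc.
    have := HB a b Ya Yb; rewrite eA eB /rhsB /F0; lra.
- split.
  + move=> [Fn [cF HA]] a c Ya Yc.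
    have h1 := HA a a c Ya Ya Yc; have h2 := HA a c c Ya Yc Yc.
    rewrite !eA (Hf a Ya) (cF a Ya) in h1; rewrite !eA (Hf c Yc) (cF c Yc) in h2.
    rewrite eB /rhsB; lra.
  + move=> HB; exists F0; split => // a b c Ya Yb Yc.
    have := HB a b Ya Yb; rewrite eA eB /rhsB /F0; lra.
- move=> Fn cF HA a c Ya Yc.
  have h1 := HA a a c Ya Ya Yc; have h2 := HA a c c Ya Yc Yc.
  rewrite !eA (Hf a Ya) (cF a Ya) in h1; rewrite !eA (Hf c Yc) (cF c Yc) in h2.
  rewrite dotvZl dotvDl rdotBl !rdotBr; lra.
Qed.
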